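(* Let $n\geqslant 2$ and $N=\{1,\ldots,n\}$. Write $\mathscr{BG}(n)=\mathsf{Lin}(\mathscr{BG}(n))\oplus\mathscr{BG}^0(n)$, where $\mathsf{Lin}(\mathscr{BG}(n))$ is the lineality space of $\mathscr{BG}(n)$ and $\mathscr{BG}^0(n)=\{v\in\mathscr{BG}(n): v(\{i\})=0 \text{ for all } i\in N\}$. Then the extremal rays of $\mathscr{BG}(n)$ (in this decomposition) are: (i) the $2n$ rays $w_1,\ldots,w_n,-w_1,\ldots,-w_n$ spanning the lineality space, where $w_i=\sum_{S\ni i}\delta_S$; (ii) the $2^n-n-2$ rays $r_S=-\delta_S$, for $S\subsetneq N$ with $|S|>1$; (iii) the $n$ rays $r_i=\sum_{S\ni i,\,|S|>1}\delta_S$, $i\in N$; i.e., the extremal rays of the pointed cone $\mathscr{BG}^0(n)$ are exactly those spanned by the $r_S$ and $r_i$ above. This yields in total $2^n+2n-2$ extremal rays.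
   Context: A game on $N=\{1,\ldots,n\}$ is a map $v:2^N\to\mathbb{R}$ with $v(\varnothing)=0$, identified with a vector in $\mathbb{R}^{2^N\setminus\{\varnothing\}}$. For nonempty $S\subseteq N$, $\delta_S(T)=1$ if $T=S$ and $0$ otherwise. A collection $\mathscr{B}$ of nonempty subsets of $N$ is balanced if there exist positive weights $(\lambda_S)_{S\in\mathscr{B}}$ with $\sum_{S\in\mathscr{B},S\ni i}\lambda_S=1$ for all $i\in N$; it is minimal balanced if no proper subcollection is balanced, and then its weights $\lambda^{\mathscr{B}}_S$ are unique. $\mathfrak{B}^*(n)$ is the set of minimal balanced collections on $N$ other than $\{N\}$. $\mathscr{BG}(n)$ is the polyhedral cone of games $v$ with $\sum_{S\in\mathscr{B}}\lambda^{\mathscr{B}}_S v(S)\leqslant v(N)$ for all $\mathscr{B}\in\mathfrak{B}^*(n)$; its lineality space is spanned by $w_1,\ldots,w_n$. *)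

(* Defs.v *)
From HB Require Import structures.
From mathcomp Require Import all_boot all_order all_algebra.
Import Order.TTheory GRing.Theory Num.Theory.
Local Open Scope ring_scope.

Notation gvec R n := {ffun {set 'I_n} -> R}.

Definition gscale (R : realFieldType) (n : nat) (a : R) (x : gvec R n) : gvec R n :=
  [ffun T : {set 'I_n} => a * x T].

Definition is_game (R : realFieldType) (n : nat) (v : gvec R n) : Prop :=
  v set0 = 0.

Definition delta (R : realFieldType) (n : nat) (S : {set 'I_n}) : gvec R n :=
  [ffun T : {set 'I_n} => (T == S)%:R].

Definition wvec (R : realFieldType) (n : nat) (i : 'I_n) : gvec R n :=
  [ffun T : {set 'I_n} => (i \in T)%:R].

Definition rset (R : realFieldType) (n : nat) (S : {set 'I_n}) : gvec R n :=
  - delta R n S.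

Definition rpt (R : realFieldType) (n : nat) (i : 'I_n) : gvec R n :=
  [ffun T : {set 'I_n} => ((i \in T) && (1 < #|T|)%N)%:R].

Definition balancing_weights (R : realFieldType) (n : nat)
    (B : {set {set 'I_n}}) (lam : {set 'I_n} -> R) : Prop :=
  (forall S, S \in B -> 0 < lam S) /\
  (forall i : 'I_n, \sum_(S in B | i \in S) lam S = 1).

Definition balanced (R : realFieldType) (n : nat) (B : {set {set 'I_n}}) : Prop :=
  (forall S, S \in B -> S != set0) /\ exists lam, balancing_weights R n B lam.

Definition minimal_balanced (R : realFieldType) (n : nat) (B : {set {set 'I_n}}) : Prop :=
  balanced R n B /\ forall B' : {set {set 'I_n}}, B' \proper B -> ~ balanced R n B'.

(* BG(n): for every minimal balanced collection B other than {N}, with its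
   (unique) weights lambda^B: sum_{S in B} lambda_S v(S) <= v(N). *)
Definition BG (R : realFieldType) (n : nat) (v : gvec R n) : Prop :=
  is_game R n v /\
  forall B : {set {set 'I_n}}, minimal_balanced R n B -> B != [set setT] ->
    forall lam, balancing_weights R n B lam ->
      \sum_(S in B) lam S * v S <= v setT.

Definition BG0 (R : realFieldType) (n : nat) (v : gvec R n) : Prop :=
  BG R n v /\ forall i : 'I_n, v [set i] = 0.

Definition lineality (R : realFieldType) (n : nat) (C : gvec R n -> Prop)
    (x : gvec R n) : Prop := C x /\ C (- x).

Definition extreme_ray (R : realFieldType) (n : nat) (C : gvec R n -> Prop)
    (x : gvec R n) : Prop :=
  C x /\ x != 0 /\
  forall y z, C y -> C z -> x = y + z -> exists a : R, 0 <= a /\ y = gscale R n a x.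

(* Main.v *)
Require Import Defs.
From HB Require Import structures.
From mathcomp Require Import all_boot all_order all_algebra.
From mathcomp Require Import ring lra.
From Stdlib Require Import Classical.
Import Order.TTheory GRing.Theory Num.Theory.
Local Open Scope ring_scope.

Section Farkas.
Variables (R : realFieldType) (k : nat).
Local Notation cT := {ffun 'I_k -> R}.
Local Notation cstr := (cT * R)%type.
Definition dotp (c : cT) (x : 'I_k -> R) := \sum_j c j * x j.

Definition sc (t : R) (c : cT) : cT := [ffun j => t * c j].

Inductive deriv (s : seq cstr) : cstr -> Prop :=
| dv_in p : p \in s -> deriv s p
| dv_add p q : deriv s p -> deriv s q -> deriv s (p.1 + q.1, p.2 + q.2)
| dv_scale (t : R) p : 0 <= t -> deriv s p -> deriv s (sc t p.1, t * p.2).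

Arguments dv_in {s p}.
Arguments dv_add {s p q}.
Arguments dv_scale {s t p}.

Lemma bounds (L U : seq R) : (forall l u, l \in L -> u \in U -> l <= u) ->
  exists t, (forall l, l \in L -> l <= t) /\ (forall u, u \in U -> t <= u).
Proof.
elim: L => [|l L IH] H.
  exists (foldr Num.min 0 U); split => // u.
  elim: U {H} => // a U IHU; rewrite inE => /orP[/eqP->|uU] /=.
    by rewrite ge_min lexx.
  by rewrite ge_min IHU ?orbT.
have [t [Ht1 Ht2]] : exists t, (forall l, l \in L -> l <= t) /\ (forall u, u \in U -> t <= u).
  by apply: IH => l' u lL uU; apply: H => //; rewrite inE lL orbT.
exists (Num.max l t); split.
  move=> l'; rewrite inE => /orP[/eqP->|lL]; first by rewrite le_max lexx.
  by rewrite le_max Ht1 ?orbT.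
move=> u uU; rewrite ge_max Ht2 // andbT; apply: H => //; by rewrite inE eqxx.
Qed.

Definition upd (x : 'I_k -> R) (j : 'I_k) (t : R) : 'I_k -> R :=
  fun j' => if j' == j then t else x j'.

Lemma dotp_upd c x j t : dotp c (upd x j t) = dotp c x + c j * (t - x j).
Proof.
rewrite /dotp (bigD1 j) //= [in RHS](bigD1 j) //= /upd eqxx.
have -> : \sum_(i | i != j) c i * (if i == j then t else x i) = \sum_(i | i != j) c i * x i.
  by apply: eq_bigr => i /negbTE ->.
rewrite mulrBr; ring.
Qed.

Definition inv_at (m : nat) (s : seq cstr) :=
  forall p, p \in s -> forall j : 'I_k, (m <= j)%N -> p.1 j = 0.

Definition comb (j : 'I_k) (p q : cstr) : cstr :=
  (sc (- q.1 j) p.1 + sc (p.1 j) q.1, (- q.1 j) * p.2 + p.1 j * q.2).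

Definition elim_s (j : 'I_k) (s : seq cstr) : seq cstr :=
  [seq p : cstr <- s | p.1 j == 0] ++
  [seq comb j pq.1 pq.2 | pq <- [seq (p, q) | p <- [seq p : cstr <- s | 0 < p.1 j],
                                               q <- [seq p : cstr <- s | p.1 j < 0]]].

Lemma dv_comb s p q a b : 0 <= a -> 0 <= b -> deriv s p -> deriv s q ->
  deriv s (sc a p.1 + sc b q.1, a * p.2 + b * q.2).
Proof.
move=> a0 b0 Hp Hq.
have := dv_add (dv_scale a0 Hp) (dv_scale b0 Hq). by [].
Qed.

Lemma elim_deriv j s p : deriv (elim_s j s) p -> deriv s p.
Proof.
elim => {p} [p|p q _ Hp _ Hq|t p t0 _ Hp]; last first.
- exact: dv_scale.
- exact: dv_add.
rewrite mem_cat => /orP[|].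
  by rewrite mem_filter => /andP[_ ps]; apply: dv_in.
case/mapP => [[a b]] /allpairsP [[a' b'] [/= + + [-> ->]]] ->.
rewrite !mem_filter => /andP[a'0 a's] /andP[b'0 b's].
apply: dv_comb; try by apply: dv_in.
  by rewrite oppr_ge0 ltW.
by rewrite ltW.
Qed.

Lemma dotp_lin a b c d x : dotp (sc a c + sc b d) x = a * dotp c x + b * dotp d x.
Proof.
rewrite /dotp !mulr_sumr -big_split /=; apply: eq_bigr => i _.
rewrite !ffunE; ring.
Qed.

Lemma fm_main m : forall s, inv_at m s ->
  (forall p, deriv s p -> (forall j, p.1 j = 0) -> p.2 <= 0) ->
  exists x, forall p, p \in s -> p.2 <= dotp p.1 x.
Proof.
elim: m => [|m IH] s Hinv H.
  exists (fun _ => 0) => p ps.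
  have -> : dotp p.1 (fun _ => 0) = 0 by rewrite /dotp big1 // => i _; rewrite mulr0.
  by apply: H; [apply: dv_in | move=> j; apply: (Hinv p ps)].
case: (ltnP m k) => [hm|hm]; last first.
  by apply: IH => // p _ j; move: (ltn_ord j) => /leq_trans/(_ hm); rewrite ltnNge => /negbTE ->.
pose j := Ordinal hm.
have Hinv' : inv_at m (elim_s j s).
  move=> p; rewrite mem_cat => /orP[|].
    rewrite mem_filter => /andP[/eqP pj ps] j' mj'.
    case: (eqVneq j' j) => [->//|nj]; apply: (Hinv p ps).
    by rewrite ltn_neqAle mj' andbT; apply: contra_neq nj => e; apply: val_inj; rewrite /= -e.
  case/mapP => [[a b]] /allpairsP [[a' b'] [/= + + [-> ->]]] ->.
  rewrite !mem_filter => /andP[_ a's] /andP[_ b's] j' mj'.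
  rewrite /comb /= !ffunE.
  case: (eqVneq j' j) => [->|nj]; first by ring.
  have mj : (m < j')%N by rewrite ltn_neqAle mj' andbT; apply: contra_neq nj => e; apply: val_inj; rewrite /= -e.
  by rewrite (Hinv a' a's j' mj) (Hinv b' b's j' mj) !mulr0 addr0.
have [x Hx] := IH _ Hinv' (fun p dp => H p (@elim_deriv j s p dp)).
pose sP := [seq p : cstr <- s | 0 < p.1 j].
pose sN := [seq p : cstr <- s | p.1 j < 0].
pose bnd (p : cstr) := x j + (p.2 - dotp p.1 x) / p.1 j.
have hLU : forall l u, l \in map bnd sP -> u \in map bnd sN -> l <= u.
  move=> l u /mapP [p pP ->] /mapP [q qN ->].
  have hc : comb j p q \in elim_s j s.
    rewrite mem_cat; apply/orP; right; apply/mapP; exists (p, q) => //.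
    by apply/allpairsP; exists (p, q).
  have := Hx _ hc; rewrite /comb /= dotp_lin.
  move: pP qN; rewrite /sP /sN !mem_filter => /andP[p0 _] /andP[q0 _].
  set a := p.1 j in p0 *; set b := q.1 j in q0 *.
  set P := p.2 - dotp p.1 x; set Q := q.2 - dotp q.1 x => hh.
  rewrite /bnd -/a -/b -/P -/Q -subr_ge0.
  have -> : x j + Q / b - (x j + P / a) = - (- b * P + a * Q) / (a * - b).
    by field; rewrite (ltr0_neq0 q0) (lt0r_neq0 p0).
  apply: divr_ge0; last by apply: ltW; apply: mulr_gt0 => //; rewrite oppr_gt0.
  rewrite oppr_ge0 /P /Q; lra.
have [t [Ht1 Ht2]] := bounds _ _ hLU.
exists (upd x j t) => p ps; rewrite dotp_upd.
case: (ltgtP (p.1 j) 0) => [pn|pp|pz].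
- have := Ht2 (bnd p) (map_f _ _); rewrite /sN mem_filter pn ps => /(_ isT).
  rewrite /bnd -subr_ge0.
  set c := p.1 j in pn *; set w := (p.2 - dotp p.1 x) / c => h.
  have ew : w * c = p.2 - dotp p.1 x by rewrite /w divfK // ltr0_neq0.
  have pn2 : 0 < - c by rewrite oppr_gt0.
  have := mulr_ge0 h (ltW pn2) => h2.
  nra.
- have := Ht1 (bnd p) (map_f _ _); rewrite /sP mem_filter pp ps => /(_ isT).
  rewrite /bnd -subr_ge0.
  set c := p.1 j in pp *; set w := (p.2 - dotp p.1 x) / c => h.
  have ew : w * c = p.2 - dotp p.1 x by rewrite /w divfK // lt0r_neq0.
  have := mulr_ge0 h (ltW pp) => h2.
  nra.
- rewrite pz mul0r addr0; apply: Hx; rewrite mem_cat mem_filter pz eqxx ps //.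
Qed.

Lemma farkas s :
  (forall p, deriv s p -> (forall j, p.1 j = 0) -> p.2 <= 0) ->
  exists x, forall p, p \in s -> p.2 <= dotp p.1 x.
Proof.
apply: (fm_main k) => p _ j; rewrite leqNgt ltn_ord //.
Qed.
End Farkas.

Section Games.
Variables (R : realFieldType) (n : nat).
Local Notation gv := {ffun {set 'I_n} -> R}.
Local Notation sT := {set 'I_n}.

Definition fv (v : gv) (lam : {set 'I_n} -> R) := \sum_(S : sT) lam S * v S.
Definition balw (lam : {set 'I_n} -> R) := forall i : 'I_n, \sum_(S : sT) (i \in S)%:R * lam S = 1.
Definition supp (lam : {set 'I_n} -> R) := [set S | lam S != 0].

Lemma sum_ind (i : 'I_n) (F : {set 'I_n} -> R) :
  \sum_(S : sT) (i \in S)%:R * F S = \sum_(S : sT | i \in S) F S.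
Proof. by rewrite [RHS]big_mkcond; apply: eq_bigr => S _; case: (i \in S); rewrite ?mul1r ?mul0r. Qed.

Lemma sum_restrict (B : {set {set 'I_n}}) (P : pred {set 'I_n}) (F : {set 'I_n} -> R) :
  (forall S, S \notin B -> F S = 0) -> \sum_(S in B | P S) F S = \sum_(S : sT | P S) F S.
Proof.
move=> H; rewrite [RHS](bigID (fun S => S \in B)) /= [X in _ + X]big1 ?addr0.
  by apply: eq_bigl => S; rewrite andbC.
by move=> S /andP[_ /H].
Qed.

Lemma sum_restrictT (B : {set {set 'I_n}}) (F : {set 'I_n} -> R) :
  (forall S, S \notin B -> F S = 0) -> \sum_(S in B) F S = \sum_(S : sT) F S.
Proof.
move=> H; rewrite [RHS](bigID (fun S => S \in B)) /= [X in _ + X]big1 ?addr0 //.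
Qed.

Lemma supp0 lam S : S \notin supp lam -> lam S = 0.
Proof. by rewrite inE negbK => /eqP. Qed.

Lemma shrink (v : gv) lam e : (forall S, 0 <= lam S) -> lam set0 = 0 -> balw lam ->
  (forall i, \sum_(S : sT) (i \in S)%:R * e S = 0) -> (forall S, lam S = 0 -> e S = 0) ->
  0 <= fv v e -> (exists S, e S < 0) ->
  exists lam', [/\ (forall S, 0 <= lam' S), lam' set0 = 0, balw lam',
    fv v lam <= fv v lam' & (#|supp lam'| < #|supp lam|)%N].
Proof.
move=> lam0 lamE bal he hz hf [S0' hS0'].
case: (@arg_minP _ _ _ S0' (fun S => e S < 0) (fun S => lam S / - e S) hS0') => S0 hS0 hmin.
set t := lam S0 / - e S0.
have eS0 : 0 < - e S0 by rewrite oppr_gt0.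
have t0 : 0 <= t by apply: divr_ge0 => //; apply: ltW.
exists (fun S => lam S + t * e S); split.
- move=> S; case: (leP 0 (e S)) => hS.
    by apply: addr_ge0 => //; apply: mulr_ge0.
  have := hmin S hS; rewrite -/t ler_pdivlMr ?oppr_gt0 // => h; lra.
- by rewrite lamE (hz _ lamE) mulr0 addr0.
- move=> i.
  have -> : \sum_(S : sT) (i \in S)%:R * (lam S + t * e S) =
     \sum_(S : sT) (i \in S)%:R * lam S + t * \sum_(S : sT) (i \in S)%:R * e S.
    by rewrite mulr_sumr -big_split /=; apply: eq_bigr => S _; rewrite mulrDr mulrCA.
  by rewrite bal he mulr0 addr0.
- have -> : fv v (fun S => lam S + t * e S) = fv v lam + t * fv v e.
    by rewrite /fv mulr_sumr -big_split /=; apply: eq_bigr => S _; rewrite mulrDl mulrA.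
  by rewrite lerDl mulr_ge0.
- apply: proper_card; apply/properP; split.
    apply/subsetP => S; rewrite !inE; apply: contra => /eqP h.
    by rewrite h (hz _ h) mulr0 addr0.
  exists S0.
    by rewrite inE; apply/eqP => h; move: hS0; rewrite (hz _ h) ltxx.
  rewrite inE negbK /t; apply/eqP; field.
  by rewrite ltr0_neq0.
Qed.

Lemma BG_all (v : gv) : BG R n v -> (0 < n)%N ->
  forall lam, (forall S, 0 <= lam S) -> lam set0 = 0 -> balw lam -> fv v lam <= v setT.
Proof.
move=> [vg vBG] n0.
pose i0 : 'I_n := Ordinal n0.
suff H : forall m lam, (#|supp lam| <= m)%N -> (forall S, 0 <= lam S) -> lam set0 = 0 ->
    balw lam -> fv v lam <= v setT by move=> lam; exact: H.
elim=> [|m IH] lam hm lam0 lamE bal.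
  have := bal i0; rewrite big1; first by move/eqP; rewrite eq_sym oner_eq0.
  move=> S _.
  move: hm; rewrite leqn0 => /eqP/cards0_eq/setP/(_ S); rewrite !inE => /negbFE/eqP->.
  by rewrite mulr0.
set B := supp lam.
have zB : forall S, S \notin B -> lam S = 0 by move=> S; apply: supp0.
have Bn0 : forall S, S \in B -> S != set0.
  by move=> S; apply: contraTneq => ->; rewrite inE lamE eqxx.
have wB : balancing_weights R n B lam.
  split.
    by move=> S; rewrite inE => h; rewrite lt_def h lam0.
  move=> i; rewrite sum_restrict; last by move=> S /zB.
  by rewrite -sum_ind bal.
have fvB : fv v lam = \sum_(S in B) lam S * v S.
  by rewrite sum_restrictT // => S /zB ->; rewrite mul0r.
case: (classic (exists B' : {set sT}, B' \proper B /\ balanced R n B')) => [[B' [pB' [_ [mu' [mu0 mubal]]]]]|nB].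
  pose mu S := if S \in B' then mu' S else 0.
  pose d S := mu S - lam S.
  have [sB' [S1 S1B S1B']] := properP pB'.
  have hd : forall i, \sum_(S : sT) (i \in S)%:R * d S = 0.
    move=> i.
    have -> : \sum_(S : sT) (i \in S)%:R * d S =
       \sum_(S : sT) (i \in S)%:R * mu S - \sum_(S : sT) (i \in S)%:R * lam S.
      by rewrite -sumrB; apply: eq_bigr => S _; rewrite mulrBr.
    rewrite bal sum_ind -(mubal i) -(sum_restrict B'); last by move=> S; rewrite /mu => /negbTE ->.
    by apply/eqP; rewrite subr_eq0; apply/eqP; apply: eq_bigr => S /andP[SB' _]; rewrite /mu SB'.
  have hdz : forall S, lam S = 0 -> d S = 0.
    move=> S hS; rewrite /d /mu hS subr0; case: ifP => // SB'.
    by move: (subsetP sB' S SB'); rewrite inE hS eqxx.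
  have dS1 : d S1 < 0.
    rewrite /d /mu (negbTE S1B') sub0r oppr_lt0 lt_def lam0 andbT.
    by move: S1B; rewrite inE.
  have [lam' [l0 lE lbal lf lc]] : exists lam', [/\ (forall S, 0 <= lam' S), lam' set0 = 0, balw lam',
      fv v lam <= fv v lam' & (#|supp lam'| < #|supp lam|)%N].
    case: (leP 0 (fv v d)) => hf.
      by apply: (shrink _ _ _ lam0 lamE bal hd hdz hf); exists S1.
    apply: (@shrink v lam (fun S => - d S) lam0 lamE bal).
    - move=> i /=; apply/eqP; rewrite -oppr_eq0 -sumrN; apply/eqP; rewrite -[RHS](hd i).
      by apply: eq_bigr => S _; rewrite mulrN opprK.
    - by move=> S /hdz ->; rewrite oppr0.
    - rewrite /fv.
      have -> : \sum_(S : sT) - d S * v S = - fv v d by rewrite /fv -sumrN; apply: eq_bigr => S _; rewrite mulNr.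
      by rewrite oppr_ge0 ltW.
    case: (boolP [exists S, - d S < 0]) => [/existsP [S hS]|hne]; first by exists S.
    exfalso.
    have [i iS1] := set0Pn _ (Bn0 _ S1B).
    have hge : forall S : sT, true -> 0 <= (i \in S)%:R * - d S.
      move=> S _; apply: mulr_ge0 => //.
      by move: hne; rewrite negb_exists => /forallP/(_ S); rewrite -leNgt.
    have hs : \sum_(S : sT) (i \in S)%:R * - d S = 0.
      apply/eqP; rewrite -oppr_eq0 -sumrN; apply/eqP; rewrite -[RHS](hd i).
      by apply: eq_bigr => S _; rewrite mulrN opprK.
    have := @psumr_eq0P _ _ xpredT (fun S : sT => (i \in S)%:R * - d S) hge hs S1 isT; rewrite iS1 mul1r => /eqP; rewrite oppr_eq0 => /eqP h.
    by move: dS1; rewrite h ltxx.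
  apply: le_trans lf _; apply: IH => //.
  by rewrite -ltnS; apply: leq_trans lc hm.
have mB : minimal_balanced R n B.
  split; first by split => //; exists lam.
  by move=> B' pB' bB'; apply: nB; exists B'.
case: (eqVneq B [set setT]) => [BT|BT].
  have zl : forall S, S != setT -> lam S = 0.
    by move=> S hS; apply: zB; rewrite BT inE.
  have := bal i0; rewrite (bigD1 setT) //= big1 => [|S /zl ->]; last by rewrite mulr0.
  rewrite in_setT mul1r addr0 => l1.
  rewrite /fv (bigD1 setT) //= big1 => [|S /zl ->]; last by rewrite mul0r.
  by rewrite l1 mul1r addr0.
by rewrite fvB; apply: vBG.
Qed.
End Games.

Arguments fv {R n} v lam.
Arguments balw {R n} lam.
Arguments deriv {R k} s _.
Arguments dotp {R k} c x.
Arguments sc {R k} t c.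

Section Games2.
Variables (R : realFieldType) (n : nat).
Local Notation gv := {ffun {set 'I_n} -> R}.
Local Notation sT := {set 'I_n}.

Lemma BG_all_mu (v : gv) : BG R n v -> (0 < n)%N ->
  forall lam mu, (forall S, 0 <= lam S) -> lam set0 = 0 -> 0 <= mu ->
  (forall i, \sum_(S : sT) (i \in S)%:R * lam S = mu) -> fv v lam <= mu * v setT.
Proof.
move=> hv n0 lam mu l0 lE mu0 hb.
case: (eqVneq mu 0) => [mz|mnz].
  have lz : forall S, lam S = 0.
    move=> S; case: (eqVneq S set0) => [->//|/set0Pn [i iS]].
    have hge : forall T : sT, xpredT T -> 0 <= (i \in T)%:R * lam T by move=> T _; rewrite mulr_ge0.
    have := @psumr_eq0P _ _ xpredT (fun T : sT => (i \in T)%:R * lam T) hge.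
    by rewrite (hb i) mz => /(_ erefl S isT); rewrite iS mul1r.
  by rewrite /fv big1 ?mz ?mul0r // => S _; rewrite lz mul0r.
have mp : 0 < mu by rewrite lt_def mnz mu0.
have H2 : fv v (fun S => lam S / mu) <= v setT.
  apply: (@BG_all R n v hv n0 (fun S => lam S / mu)).
  - by move=> S; rewrite divr_ge0.
  - by rewrite lE mul0r.
  - move=> i; rewrite /=.
    have -> : \sum_(S : sT) (i \in S)%:R * (lam S / mu) = (\sum_(S : sT) (i \in S)%:R * lam S) / mu.
      by rewrite mulr_suml; apply: eq_bigr => S _; rewrite mulrA.
    by rewrite hb divff.
move: H2; rewrite /fv.
have -> : \sum_(S : sT) lam S / mu * v S = (\sum_(S : sT) lam S * v S) / mu.
  by rewrite mulr_suml; apply: eq_bigr => S _; rewrite mulrAC.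
by rewrite ler_pdivrMr // mulrC.
Qed.

Definition chi (S : sT) : {ffun 'I_n -> R} := [ffun i => (i \in S)%:R].
Definition chiN : {ffun 'I_n -> R} := [ffun i => -1].
Definition sys (v : gv) : seq ({ffun 'I_n -> R} * R) :=
  [seq (chi X, v X) | X <- enum [set X : sT | X != set0]] ++ [:: (chiN, - v setT)].

Lemma sum_delta (S : sT) (F : sT -> R) : \sum_(T : sT) (T == S)%:R * F T = F S.
Proof.
rewrite (bigD1 S) //= eqxx mul1r big1 ?addr0 // => T /negbTE ->; by rewrite mul0r.
Qed.

Lemma sys_deriv (v : gv) p : deriv (sys v) p ->
  exists lam mu, [/\ (forall S, 0 <= lam S), lam set0 = 0, 0 <= mu,
    (forall i, p.1 i = \sum_(S : sT) (i \in S)%:R * lam S - mu) &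
    p.2 = fv v lam - mu * v setT].
Proof.
elim => {p} [p|p q _ [l1 [m1 [l10 l1E m10 h11 h12]]] _ [l2 [m2 [l20 l2E m20 h21 h22]]]
  |t p t0 _ [l1 [m1 [l10 l1E m10 h11 h12]]]].
- rewrite mem_cat => /orP[/mapP [S]|]; last first.
    rewrite inE => /eqP ->; exists (fun _ => 0), 1; split => //=.
      by move=> i; rewrite ffunE big1 ?sub0r // => S _; rewrite mulr0.
    by rewrite /fv big1 ?sub0r ?mul1r // => S _; rewrite mul0r.
  rewrite mem_enum inE => Sn0 ->; exists (fun T => (T == S)%:R), 0; split => //=.
  + by move: Sn0; rewrite eq_sym => /negbTE ->.
  + by move=> i; rewrite ffunE subr0; under eq_bigr do rewrite mulrC; rewrite sum_delta.
  + by rewrite /fv sum_delta mul0r subr0.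
- exists (fun S => l1 S + l2 S), (m1 + m2); split => /=.
  + by move=> S; rewrite addr_ge0.
  + by rewrite l1E l2E addr0.
  + by rewrite addr_ge0.
  + move=> i; rewrite ffunE h11 h21.
    rewrite opprD addrACA -big_split /=; congr (_ + _); apply: eq_bigr => S _; by rewrite mulrDr.
  + rewrite h12 h22 /fv; rewrite mulrDl opprD addrACA -big_split /=; congr (_ + _).
    by apply: eq_bigr => S _; rewrite mulrDl.
- exists (fun S => t * l1 S), (t * m1); split => /=.
  + by move=> S; rewrite mulr_ge0.
  + by rewrite l1E mulr0.
  + by rewrite mulr_ge0.
  + move=> i; rewrite /sc ffunE h11 mulrBr mulr_sumr; congr (_ - _).
    by apply: eq_bigr => S _; rewrite mulrCA.
  + rewrite h12 /fv mulrBr mulr_sumr -mulrA; congr (_ - _).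
    by apply: eq_bigr => S _; rewrite mulrA.
Qed.

Lemma core (v : gv) : BG R n v -> (0 < n)%N ->
  exists a : 'I_n -> R, (forall S : sT, S != set0 -> v S <= \sum_i (i \in S)%:R * a i) /\
    \sum_i a i <= v setT.
Proof.
move=> hv n0.
have hF : forall p, deriv (sys v) p -> (forall j, p.1 j = 0) -> p.2 <= 0.
  move=> p dp hz; have [lam [mu [l0 lE m0 h1 h2]]] := @sys_deriv v p dp.
  rewrite h2 subr_le0; apply: BG_all_mu => // i; apply/eqP; rewrite -subr_eq0 -h1 hz //.
have [x hx] := @farkas R n (sys v) hF.
exists x; split.
  move=> S Sn0.
  have hS : (chi S, v S) \in sys v.
    by rewrite mem_cat; apply/orP; left; apply/mapP; exists S; rewrite ?mem_enum ?inE.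
  have := hx _ hS; rewrite /dotp /=.
  by under eq_bigr do rewrite ffunE.
have hN : (chiN, - v setT) \in sys v by rewrite mem_cat mem_seq1 eqxx orbT.
have := hx _ hN; rewrite /dotp /=.
under eq_bigr do rewrite ffunE mulN1r.
by rewrite sumrN lerN2.
Qed.
End Games2.

Arguments fv {R n} v lam.
Arguments balw {R n} lam.

Section Games3.
Variables (R : realFieldType) (n : nat).
Local Notation gv := {ffun {set 'I_n} -> R}.
Local Notation sT := {set 'I_n}.

Lemma sum_deltaT (T : finType) (s : T) (F : T -> R) : \sum_(t : T) (t == s)%:R * F t = F s.
Proof.
rewrite (bigD1 s) //= eqxx mul1r big1 ?addr0 // => t /negbTE ->; by rewrite mul0r.
Qed.

Lemma sum_deltaT' (T : finType) (s : T) (F : T -> R) : \sum_(t : T) F t * (t == s)%:R = F s.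
Proof. by rewrite -(sum_deltaT _ s F); apply: eq_bigr => t _; rewrite mulrC. Qed.

Lemma sum_fam (P : pred 'I_n) (f : 'I_n -> sT) (F : sT -> R) :
  \sum_(X : sT) F X * \sum_(j | P j) (X == f j)%:R = \sum_(j | P j) F (f j).
Proof.
under eq_bigr do rewrite mulr_sumr.
rewrite exchange_big /=; apply: eq_bigr => j _.
exact: sum_deltaT'.
Qed.

Lemma fvD (y z : gv) lam : fv (y + z) lam = fv y lam + fv z lam.
Proof. by rewrite /fv -big_split; apply: eq_bigr => S _; rewrite ffunE mulrDr. Qed.

Lemma fvN (y : gv) lam : fv (- y) lam = - fv y lam.
Proof. by rewrite /fv -sumrN; apply: eq_bigr => S _; rewrite ffunE mulrN. Qed.

Lemma BG_add (y z : gv) : BG R n y -> BG R n z -> BG R n (y + z).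
Proof.
move=> [hy1 hy2] [hz1 hz2]; split; first by rewrite /is_game ffunE hy1 hz1 addr0.
move=> B mB BT lam wl.
have := hy2 B mB BT lam wl; have := hz2 B mB BT lam wl.
rewrite ffunE.
have -> : \sum_(S in B) lam S * (y + z) S = \sum_(S in B) lam S * y S + \sum_(S in B) lam S * z S.
  by rewrite -big_split; apply: eq_bigr => S _; rewrite ffunE mulrDr.
lra.
Qed.

Lemma BG_scale (y : gv) a : 0 <= a -> BG R n y -> BG R n (gscale R n a y).
Proof.
move=> a0 [hy1 hy2]; split; first by rewrite /is_game ffunE hy1 mulr0.
move=> B mB BT lam wl; rewrite ffunE.
have -> : \sum_(S in B) lam S * gscale R n a y S = a * \sum_(S in B) lam S * y S.
  by rewrite mulr_sumr; apply: eq_bigr => S _; rewrite ffunE mulrCA.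
by apply: ler_wpM2l => //; apply: hy2.
Qed.

Lemma BG0_add (y z : gv) : BG0 R n y -> BG0 R n z -> BG0 R n (y + z).
Proof. by move=> [h1 h2] [h3 h4]; split; [apply: BG_add | move=> i; rewrite ffunE h2 h4 addr0]. Qed.

Lemma BG0_scale (y : gv) a : 0 <= a -> BG0 R n y -> BG0 R n (gscale R n a y).
Proof. by move=> a0 [h1 h2]; split; [apply: BG_scale | move=> i; rewrite ffunE h2 mulr0]. Qed.

Lemma BG0_zero : BG0 R n 0.
Proof.
split; last by move=> i; rewrite ffunE.
split; first by rewrite /is_game ffunE.
move=> B _ _ lam _; rewrite ffunE big1 // => S _; by rewrite ffunE mulr0.
Qed.

Lemma additive_BG (x : gv) (c : 'I_n -> R) :
  (forall T, x T = \sum_i (i \in T)%:R * c i) -> BG R n x.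
Proof.
move=> hx; split; first by rewrite /is_game hx big1 // => i _; rewrite inE mul0r.
move=> B _ _ lam [_ hb].
rewrite hx.
have -> : \sum_(S in B) lam S * x S = \sum_i c i * \sum_(S in B) (i \in S)%:R * lam S.
  under eq_bigr do rewrite hx mulr_sumr.
  rewrite exchange_big /=; apply: eq_bigr => i _; rewrite mulr_sumr.
  by apply: eq_bigr => S _; ring.
rewrite le_eqVlt; apply/orP; left; apply/eqP; apply: eq_bigr => i _; rewrite inE mul1r.
suff -> : \sum_(S in B) (i \in S)%:R * lam S = 1 by rewrite mulr1.
rewrite -[RHS](hb i) big_mkcondr /=.
by apply: eq_bigr => S _; case: (i \in S); rewrite ?mul1r ?mul0r.
Qed.

Definition lin_of (c : 'I_n -> R) : gv := \sum_(i < n) gscale R n (c i) (wvec R n i).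

Lemma lin_ofE c T : lin_of c T = \sum_i (i \in T)%:R * c i.
Proof.
rewrite /lin_of sum_ffunE; apply: eq_bigr => i _; by rewrite !ffunE mulrC.
Qed.

Lemma lin_of1 c (i : 'I_n) : lin_of c [set i] = c i.
Proof.
rewrite lin_ofE -(sum_deltaT _ i c); apply: eq_bigr => j _; by rewrite inE.
Qed.

Lemma lin_of_lin c : lineality R n (BG R n) (lin_of c).
Proof.
split; first by apply: (@additive_BG _ c) => T; rewrite lin_ofE.
apply: (@additive_BG _ (fun i => - c i)) => T.
by rewrite ffunE lin_ofE -sumrN; apply: eq_bigr => i _; rewrite mulrN.
Qed.

Definition dl (S : sT) : sT -> R := fun X => (X == S)%:R.

Definition wsing (T : sT) : sT -> R := fun X => (X == T)%:R + \sum_(j | j \notin T) (X == [set j])%:R.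

Lemma sing_bal (T : sT) : balw (wsing T).
Proof.
move=> i; rewrite /wsing.
under eq_bigr do rewrite mulrDr.
rewrite big_split /= sum_deltaT' sum_fam.
under [X in _ + X = _]eq_bigr do rewrite inE.
rewrite (eq_bigr (fun j => (j == i)%:R)) => [|j _]; last by rewrite eq_sym.
case iT: (i \in T).
  by rewrite big1 ?addr0 // => j jT; case: eqP jT => // ->; rewrite iT.
rewrite add0r (bigD1 i) ?iT //= eqxx big1 ?addr0 // => j /andP[_ /negbTE ->] //.
Qed.

Lemma sing_fv (v : gv) (T : sT) :
  fv v (wsing T) = v T + \sum_(j | j \notin T) v [set j].
Proof.
rewrite /fv /wsing; under eq_bigr do rewrite mulrDl.
rewrite big_split /=; congr (_ + _).
  by rewrite sum_deltaT.
rewrite -(sum_fam _ (fun j => [set j]) v); apply: eq_bigr => X _; by rewrite mulrC.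
Qed.

Lemma sing_pos (T : sT) X : 0 <= wsing T X.
Proof. by rewrite /wsing; apply: addr_ge0 => //; apply: sumr_ge0. Qed.

Lemma sing_set0 (T : sT) : T != set0 -> wsing T set0 = 0.
Proof.
move=> Tn0; rewrite /wsing eq_sym (negbTE Tn0) add0r big1 // => j _.
by case: eqP => // /setP/(_ j); rewrite !inE eqxx.
Qed.
End Games3.

Arguments fv {R n} v lam.
Arguments balw {R n} lam.

Section Games4.
Variables (R : realFieldType) (n : nat).
Local Notation gv := {ffun {set 'I_n} -> R}.
Local Notation sT := {set 'I_n}.

Lemma sum_indI (T : sT) (F : 'I_n -> R) :
  \sum_i (i \in T)%:R * F i = \sum_(i | i \in T) F i.
Proof. by rewrite [RHS]big_mkcond; apply: eq_bigr => i _; case: (i \in T); rewrite ?mul1r ?mul0r. Qed.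

Lemma lin_char (x : gv) : (0 < n)%N -> lineality R n (BG R n) x ->
  x = lin_of R n (fun i => x [set i]).
Proof.
move=> n0 [h1 h2].
have eqf : forall lam, (forall S, 0 <= lam S) -> lam set0 = 0 -> balw lam -> fv x lam = x setT.
  move=> lam l0 lE lb; apply/eqP; rewrite eq_le (@BG_all R n x h1 n0 lam l0 lE lb) /=.
  by have := @BG_all R n (- x) h2 n0 lam l0 lE lb; rewrite fvN ffunE lerN2.
have ew : forall T : sT, T != set0 -> x T + \sum_(j | j \notin T) x [set j] = x setT.
  move=> T Tn0; rewrite -(sing_fv R n x T); apply: eqf.
  - exact: sing_pos.
  - exact: sing_set0.
  - exact: sing_bal.
pose i0 : 'I_n := Ordinal n0.
have eN : \sum_j x [set j] = x setT.
  rewrite -(ew [set i0]) ?set11 //; last by apply/set0Pn; exists i0; rewrite set11.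
  rewrite (bigD1 i0) //=; congr (_ + _); apply: eq_bigl => j; by rewrite inE.
apply/ffunP => T; rewrite lin_ofE sum_indI.
case: (eqVneq T set0) => [->|Tn0].
  by rewrite h1.1 big1 // => i; rewrite inE.
apply: (@addIr _ (\sum_(j | j \notin T) x [set j])).
by rewrite ew // -eN (bigID (fun j => j \in T)) /=.
Qed.

Lemma BG0_nonneg (y : gv) : (0 < n)%N -> BG0 R n y -> 0 <= y setT.
Proof.
move=> n0 [hy hs]; pose i0 : 'I_n := Ordinal n0.
have i0n : [set i0] != set0 by apply/set0Pn; exists i0; rewrite set11.
have := @BG_all R n y hy n0 (wsing R n [set i0]) (sing_pos R n _) (sing_set0 R n _ i0n) (sing_bal R n _).
by rewrite sing_fv hs big1 ?add0r // => j _; exact: hs.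
Qed.

Lemma BG0_le (y : gv) T : (0 < n)%N -> BG0 R n y -> T != set0 -> y T <= y setT.
Proof.
move=> n0 [hy hs] Tn0.
have := @BG_all R n y hy n0 (wsing R n T) (sing_pos R n _) (sing_set0 R n _ Tn0) (sing_bal R n _).
by rewrite sing_fv big1 ?addr0 // => j _; exact: hs.
Qed.

Lemma tight (y z : gv) lam : (0 < n)%N -> BG R n y -> BG R n z ->
  (forall S, 0 <= lam S) -> lam set0 = 0 -> balw lam ->
  fv (y + z) lam = (y + z) setT -> fv y lam = y setT.
Proof.
move=> n0 hy hz l0 lE lb; rewrite fvD ffunE => e.
have := @BG_all R n y hy n0 lam l0 lE lb; have := @BG_all R n z hz n0 lam l0 lE lb.
lra.
Qed.

Lemma card_gt1 (T : sT) (i j : 'I_n) : i \in T -> j \in T -> i != j -> (1 < #|T|)%N.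
Proof.
move=> iT jT ij; apply: leq_trans (subset_leq_card (_ : [set i; j] \subset T)).
  by rewrite cards2 ij.
by apply/subsetP => k; rewrite !inE => /orP[/eqP->|/eqP->].
Qed.

Lemma card_le1 (T : sT) : (#|T| <= 1)%N -> T = set0 \/ exists j, T = [set j].
Proof.
rewrite leq_eqVlt ltnS leqn0 => /orP[/cards1P [j ->]|/eqP/cards0_eq ->]; by [right; exists j | left].
Qed.

Lemma BG0_rset (S : sT) : S \proper setT -> (1 < #|S|)%N -> BG0 R n (rset R n S).
Proof.
move=> pS cS.
have Sn0 : S != set0 by apply/negP => /eqP e; move: cS; rewrite e cards0.
have ST : setT != S by rewrite eq_sym; apply: proper_neq.
split; last first.
  move=> i; rewrite !ffunE; case: eqP => [e|]; last by rewrite oppr0.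
  by move: cS; rewrite -e cards1.
split; first by rewrite /is_game !ffunE eq_sym (negbTE Sn0) oppr0.
move=> B _ _ lam [lp _]; rewrite !ffunE (negbTE ST) oppr0.
apply: sumr_le0 => T TB; rewrite !ffunE mulrN oppr_le0 mulr_ge0 //.
exact: ltW (lp T TB).
Qed.

Lemma rpt_setT (i : 'I_n) : (1 < n)%N -> rpt R n i setT = 1.
Proof. by move=> n1; rewrite ffunE in_setT cardsT card_ord n1. Qed.

Lemma BG0_rpt (i : 'I_n) : (1 < n)%N -> BG0 R n (rpt R n i).
Proof.
move=> n1; split; last by move=> j; rewrite ffunE cards1 andbF.
split; first by rewrite /is_game ffunE inE.
move=> B _ _ lam [lp lb]; rewrite rpt_setT // -(lb i) big_mkcondr /=.
apply: ler_sum => T TB; rewrite ffunE; case: (i \in T) => /=; last by rewrite mulr0.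
case: (1 < #|T|)%N; rewrite ?mulr1 ?mulr0 //; exact: ltW (lp T TB).
Qed.

Lemma ext_rset (S : sT) a : (0 < n)%N -> S \proper setT -> (1 < #|S|)%N -> 0 < a ->
  extreme_ray R n (BG0 R n) (gscale R n a (rset R n S)).
Proof.
move=> n0 pS cS a0.
have Sn0 : S != set0 by apply/negP => /eqP e; move: cS; rewrite e cards0.
have ST : setT != S by rewrite eq_sym; apply: proper_neq.
split; first by apply: BG0_scale; [apply: ltW | apply: BG0_rset].
split.
  apply/eqP => /ffunP/(_ S); rewrite !ffunE eqxx mulrN1 => /eqP; rewrite oppr_eq0 => /eqP a00.
  by move: a0; rewrite a00 ltxx.
move=> y z hy hz e.
have ev : forall T, y T + z T = a * - (T == S)%:R.
  by move=> T; have := congr1 (fun f : gv => f T) e; rewrite !ffunE => ->.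
have yN0 : y setT = 0.
  have := ev setT; rewrite (negbTE ST) oppr0 mulr0.
  have := BG0_nonneg _ n0 hy; have := BG0_nonneg _ n0 hz; lra.
have zN0 : z setT = 0 by have := ev setT; rewrite (negbTE ST) oppr0 mulr0 yN0 add0r.
have yle : forall T, T != set0 -> y T <= 0 by move=> T Tn0; rewrite -yN0; apply: BG0_le.
have zle : forall T, T != set0 -> z T <= 0 by move=> T Tn0; rewrite -zN0; apply: BG0_le.
exists (- y S / a); split.
  by apply: divr_ge0; [rewrite oppr_ge0; apply: yle | apply: ltW].
apply/ffunP => T; rewrite !ffunE.
case: (eqVneq T S) => [->|TS].
  by rewrite /= mulr1n; field; rewrite gt_eqF.
rewrite /= mulr0n oppr0 !mulr0.
case: (eqVneq T set0) => [->|Tn0]; first by case: hy => [[]].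
have := ev T; rewrite (negbTE TS) oppr0 mulr0; have := yle T Tn0; have := zle T Tn0; lra.
Qed.

Lemma ext_rpt (i : 'I_n) a : (1 < n)%N -> 0 < a ->
  extreme_ray R n (BG0 R n) (gscale R n a (rpt R n i)).
Proof.
move=> n1 a0.
have n0 : (0 < n)%N by apply: ltnW.
set x := gscale R n a (rpt R n i).
have xT : x setT = a by rewrite ffunE rpt_setT // mulr1.
have xE : forall T, x T = a * ((i \in T) && (1 < #|T|)%N)%:R by move=> T; rewrite !ffunE.
split; first by apply: BG0_scale; [apply: ltW | apply: BG0_rpt].
split.
  apply/eqP => /ffunP/(_ setT); rewrite xT ffunE => a00.
  by move: a0; rewrite a00 ltxx.
move=> y z hy hz e.
exists (y setT / a); split.
  by apply: divr_ge0; [apply: BG0_nonneg | apply: ltW].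
have tL : forall lam, (forall S, 0 <= lam S) -> lam set0 = 0 -> balw lam ->
    fv x lam = x setT -> fv y lam = y setT.
  move=> lam l0 lE lb; rewrite e => h.
  exact: (@tight y z lam n0 hy.1 hz.1 l0 lE lb h).
have c1 : forall U : sT, i \in U -> (1 < #|U|)%N -> y U = y setT.
  move=> U iU cU.
  have Un0 : U != set0 by apply/set0Pn; exists i.
  have := tL (wsing R n U) (sing_pos R n U) (sing_set0 R n U Un0) (sing_bal R n U).
  have sx : \sum_(j | j \notin U) x [set j] = 0.
    by rewrite big1 // => j _; rewrite xE cards1 andbF mulr0.
  have sy : \sum_(j | j \notin U) y [set j] = 0.
    by rewrite big1 // => j _; case: hy => _ ->.
  by rewrite !sing_fv sx sy !addr0 xE iU cU xT mulr1 => /(_ erefl).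
have c2 : forall T : sT, i \notin T -> (1 < #|T|)%N -> y T = 0.
  move=> T iT cT.
  have [j jT] : exists j, j \in T.
    by apply/set0Pn; apply/negP => /eqP e0; move: cT; rewrite e0 cards0.
  have [k kT] : exists k, k \in T :\ j.
    apply/set0Pn; apply/negP => /eqP e0; move: cT.
    by rewrite (cardsD1 j T) jT e0 cards0.
  move: kT; rewrite !inE => /andP[kj kT'].
  have ij : i != j by apply: contraNneq iT => ->.
  have ik : i != k by apply: contraNneq iT => ->.
  pose U := ~: T :|: [set j].
  pose C := ~: [set j].
  have iU : i \in U by rewrite !inE iT.
  have jU : j \in U by rewrite !inE eqxx orbT.
  have iC : i \in C by rewrite !inE.
  have kC : k \in C by rewrite !inE.
  have cU : (1 < #|U|)%N by exact: (@card_gt1 U i j iU jU ij).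
  have cC : (1 < #|C|)%N by exact: (@card_gt1 C i k iC kC ik).
  pose lam : sT -> R := fun X => ((X == T)%:R + (X == U)%:R + (X == C)%:R) / 2.
  have fvl : forall w : gv, fv w lam = (w T + w U + w C) / 2.
    move=> w; rewrite -(sum_deltaT' R _ T w) -(sum_deltaT' R _ U w) -(sum_deltaT' R _ C w).
    rewrite -!big_split /= mulr_suml /fv; apply: eq_bigr => X _; rewrite /lam; ring.
  have l0 : forall S, 0 <= lam S by move=> S; rewrite /lam divr_ge0 // !addr_ge0.
  have lE : lam set0 = 0.
    have ne : forall (V : sT) (k : 'I_n), k \in V -> (set0 == V) = false.
      by move=> V k' kV; apply/negbTE/eqP => e0; move: kV; rewrite -e0 inE.
    by rewrite /lam (ne _ _ jT) (ne _ _ jU) (ne _ _ iC) !addr0 mul0r.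
  have lb : balw lam.
    move=> k'.
    have -> : \sum_(X : sT) (k' \in X)%:R * lam X =
        ((k' \in T)%:R + (k' \in U)%:R + (k' \in C)%:R) / 2.
      rewrite -(sum_deltaT' R _ T (fun X => (k' \in X)%:R)) -(sum_deltaT' R _ U (fun X => (k' \in X)%:R)).
      rewrite -(sum_deltaT' R _ C (fun X => (k' \in X)%:R)).
      rewrite -!big_split /= mulr_suml; apply: eq_bigr => X _; rewrite /lam; ring.
    rewrite !inE; case: (eqVneq k' j) => [->|k'j]; first by rewrite jT orbT /=; field.
    by rewrite orbF; case: (k' \in T) => /=; field.
  have := tL lam l0 lE lb; rewrite !fvl !xE (negbTE iT) iU cU iC cC -xE xT /=.
  rewrite (c1 U iU cU) (c1 C iC cC) => h.
  have : (y T + y setT + y setT) / 2 = y setT by apply: h; field.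
  move=> h2.
  have h3 : y T + y setT + y setT = (y T + y setT + y setT) / 2 * 2 by field.
  rewrite h2 in h3; lra.
apply/ffunP => T; rewrite [in RHS]ffunE xE.
case: (leqP #|T| 1) => cT.
  rewrite andbF mulr0 mulr0.
  case: (card_le1 _ cT) => [->|[j ->]]; first by case: hy => [[]].
  by case: hy => _ ->.
case: (boolP (i \in T)) => iT /=.
  by rewrite (c1 T iT cT); field; rewrite gt_eqF.
by rewrite mulr0 mulr0 (c2 T iT cT).
Qed.

Lemma gscaleA c d (y : gv) : gscale R n c (gscale R n d y) = gscale R n (c * d) y.
Proof. by apply/ffunP => T; rewrite !ffunE mulrA. Qed.

Lemma gscale0 (y : gv) : gscale R n 0 y = 0.
Proof. by apply/ffunP => T; rewrite !ffunE mul0r. Qed.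

Lemma ext_sum (C : gv -> Prop) x : extreme_ray R n C x -> C 0 ->
  (forall y z, C y -> C z -> C (y + z)) ->
  forall ys : seq gv, (forall y, y \in ys -> C y) -> x = \sum_(y <- ys) y ->
  exists2 y, y \in ys & exists c, 0 < c /\ x = gscale R n c y.
Proof.
move=> [Cx [xn0 ext]] C0 Cadd; elim => [|y ys IH] hys e.
  by move: xn0; rewrite e big_nil eqxx.
have Cs : C (\sum_(y' <- ys) y').
  rewrite big_seq; apply: (big_ind C) => // y' yys; apply: hys.
  by rewrite inE yys orbT.
have Cy : C y by apply: hys; rewrite inE eqxx.
move: e; rewrite big_cons => e.
have [al [al0 hal]] := ext y _ Cy Cs e.
case: (eqVneq al 0) => [a00|an0].
  have [y' y'ys hy'] : exists2 y', y' \in ys & exists c, 0 < c /\ x = gscale R n c y'.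
    apply: IH; first by move=> y' h; apply: hys; rewrite inE h orbT.
    by rewrite e hal a00 gscale0 add0r.
  by exists y' => //; rewrite inE y'ys orbT.
exists y; first by rewrite inE eqxx.
exists al^-1; split; first by rewrite invr_gt0 lt_def an0 al0.
by rewrite hal gscaleA mulVf // ?gscale1; apply/ffunP => T; rewrite ffunE mul1r.
Qed.

Lemma ext_char x : (1 < n)%N -> extreme_ray R n (BG0 R n) x ->
  (exists (S : sT) (a : R), S \proper setT /\ (1 < #|S|)%N /\ 0 < a /\ x = gscale R n a (rset R n S)) \/
  (exists (i : 'I_n) (a : R), 0 < a /\ x = gscale R n a (rpt R n i)).
Proof.
move=> n1 hx; have n0 : (0 < n)%N by apply: ltnW.
have [[xBG xs] [xn0 _]] := hx.
have [a [ha hN]] := @core R n x xBG n0.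
have ai0 : forall i, 0 <= a i.
  move=> i; have i0 : [set i] != set0 by apply/set0Pn; exists i; rewrite set11.
  have := ha [set i] i0; rewrite xs.
  by under eq_bigr do rewrite in_set1; rewrite (sum_deltaT R _ i a).
have Tn0 : [set: 'I_n] != set0 by apply/set0Pn; exists (Ordinal n0).
have sumN : \sum_i a i = x setT.
  apply/le_anti; rewrite hN /=.
  have e1 : \sum_i (i \in setT)%:R * a i = \sum_i a i.
    by apply: eq_bigr => i _; rewrite in_setT mul1r.
  by rewrite -e1; apply: ha.
pose P := [set S : sT | (S \proper setT) && (1 < #|S|)%N].
pose b (S : sT) := \sum_i (i \in S)%:R * a i - x S.
have b0 : forall S, S \in P -> 0 <= b S.
  move=> S; rewrite inE => /andP[_ cS]; rewrite /b subr_ge0; apply: ha.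
  by apply/negP => /eqP e0; move: cS; rewrite e0 cards0.
pose ys := [seq gscale R n (a i) (rpt R n i) | i <- index_enum 'I_n] ++
           [seq gscale R n (b X) (rset R n X) | X <- enum P].
have hys : forall y, y \in ys -> BG0 R n y.
  move=> y; rewrite mem_cat => /orP[] /mapP [z zin ->]; apply: BG0_scale.
  - exact: ai0.
  - exact: BG0_rpt.
  - by apply: b0; move: zin; rewrite mem_enum.
  - by move: zin; rewrite mem_enum inE => /andP[p c]; apply: BG0_rset.
have xsum : x = \sum_(y <- ys) y.
  apply/ffunP => T; rewrite big_cat ffunE !sum_ffunE !big_map /= !big_enum /=.
  under eq_bigr do rewrite ffunE ffunE.
  under [X in _ = _ + X]eq_bigr do rewrite ffunE !ffunE.
  have e2 : \sum_(S in P) b S * (1 *- (T == S)) = if T \in P then - b T else 0.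
    case: ifP => TP.
      rewrite (bigD1 T) //= eqxx mulr1n mulrN1 big1 ?addr0 // => S /andP[_ /negbTE].
      by rewrite eq_sym => ->; rewrite mulr0n oppr0 mulr0.
    rewrite big1 // => S SP; have : T != S by apply: contraFneq TP => ->.
    by move/negbTE => ->; rewrite mulr0n oppr0 mulr0.
  rewrite e2 inE.
  case: (leqP #|T| 1) => cT.
    rewrite andbF big1 ?add0r => [|i _]; last by rewrite andbF mulr0.
    by case: (card_le1 _ cT) => [->|[j ->]]; [case: xBG | rewrite xs].
  rewrite andbT.
  under eq_bigr do rewrite andbT.
  case: (eqVneq T setT) => [->|TT].
    rewrite properE subxx /= addr0 -sumN.
    by apply: eq_bigr => i _; rewrite in_setT mulr1.
  have -> : T \proper setT by rewrite properT.
  rewrite /b.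
  have -> : \sum_(i < n) a i * (i \in T)%:R = \sum_i (i \in T)%:R * a i.
    by apply: eq_bigr => i _; rewrite mulrC.
  by rewrite opprB addrC subrK.
have [y yin [c [c0 hc]]] :=
  @ext_sum (BG0 R n) x hx (BG0_zero R n) (@BG0_add R n) ys hys xsum.
move: yin; rewrite mem_cat => /orP[] /mapP [z zin ey]; rewrite ey gscaleA in hc.
- right; exists z, (c * a z); split => //.
  rewrite mulr_gt0 // lt_def ai0 andbT; apply/eqP => az0.
  by move: xn0; rewrite hc az0 mulr0 gscale0 eqxx.
- left; exists z, (c * b z).
  move: zin; rewrite mem_enum => zP; move: (zP); rewrite inE => /andP[pz cz].
  do 3!split => //.
  rewrite mulr_gt0 // lt_def b0 // andbT; apply/eqP => bz0.
  by move: xn0; rewrite hc bz0 mulr0 gscale0 eqxx.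
Qed.
End Games4.

Theorem theorem3 (R : realFieldType) (n : nat) (hn : (2 <= n)%N) :
  (* the lineality space of BG(n) is spanned by w_1, ..., w_n *)
  (forall x : gvec R n, lineality R n (BG R n) x <->
     exists c : 'I_n -> R, x = \sum_(i < n) gscale R n (c i) (wvec R n i)) /\
  (* BG(n) = Lin(BG(n)) (+) BG^0(n) *)
  (forall l v0 : gvec R n, lineality R n (BG R n) l -> BG0 R n v0 -> BG R n (l + v0)) /\
  (forall v : gvec R n, BG R n v ->
     exists l v0, lineality R n (BG R n) l /\ BG0 R n v0 /\ v = l + v0) /\
  (forall l v0 l' v0' : gvec R n,
     lineality R n (BG R n) l -> BG0 R n v0 -> lineality R n (BG R n) l' -> BG0 R n v0' ->
     l + v0 = l' + v0' -> l = l' /\ v0 = v0') /\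
  (* the extremal rays of the pointed cone BG^0(n) are exactly those spanned
     by r_S (S proper, |S| > 1) and r_i (i in N) *)
  (forall x : gvec R n, extreme_ray R n (BG0 R n) x <->
     (exists (S : {set 'I_n}) (a : R),
         S \proper setT /\ (1 < #|S|)%N /\ 0 < a /\ x = gscale R n a (rset R n S)) \/
     (exists (i : 'I_n) (a : R), 0 < a /\ x = gscale R n a (rpt R n i))).
Proof.
have n1 : (1 < n)%N := hn.
have n0 : (0 < n)%N by apply: ltnW.
split.
  move=> x; split => [hl|[c ->]]; last exact: lin_of_lin.
  by exists (fun i => x [set i]); exact: (@lin_char R n x n0 hl).
split.
  by move=> l v0 hl hv; apply: BG_add; [exact: hl.1 | exact: hv.1].
split.
  move=> v hv; exists (lin_of R n (fun i => v [set i])), (v - lin_of R n (fun i => v [set i])).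
  split; first exact: lin_of_lin.
  split; last by rewrite addrC subrK.
  split; first by apply: BG_add => //; exact: (lin_of_lin R n _).2.
  by move=> i; rewrite !ffunE lin_of1 subrr.
split.
  move=> l v0 l' v0' hl hv hl' hv' e.
  have el : forall i, l [set i] = l' [set i].
    move=> i; have := congr1 (fun f : gvec R n => f [set i]) e.
    by rewrite !ffunE hv.2 hv'.2 !addr0.
  have ll : l = l'.
    rewrite (@lin_char R n l n0 hl) (@lin_char R n l' n0 hl'); apply/ffunP => T; rewrite !lin_ofE.
    by apply: eq_bigr => i _; rewrite el.
  by split => //; move: e; rewrite ll => /addrI.
move=> x; split; first exact: (@ext_char R n x n1).
case=> [[S [a [pS [cS [a0 ->]]]]]|[i [a [a0 ->]]]].
  exact: (@ext_rset R n S a n0 pS cS a0).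
exact: (@ext_rpt R n i a n1 a0).
Qed.
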